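(* Let $A\in\mathbb{R}^{n\times d}$, $b\in\mathbb{R}^n$, and suppose $Ax=b$ admits a solution $x^*$. Let $w$ be a random variable in $\mathbb{R}^d$, and let $\mathcal{L}(w) = \mathrm{span}\lbrace z\in\mathbb{R}^n : \mathbb{P}[z'Aw=0]=1\rbrace$ and $\mathcal{C}(w) = \mathcal{L}(w)^\perp$. Let $\lbrace w_\ell:\ell\geq0\rbrace$ be random variables in $\mathbb{R}^d$ with $\mathbb{P}[Aw_\ell\in\mathcal{C}(w)]=1$ for all $\ell$. Let $x_0\in\mathbb{R}^d$ be arbitrary, $$x_{k+1} = x_k + \frac{w_kw_k'A'(b-Ax_k)}{\|Aw_k\|_2^2},$$ and $r_k = Ax_k - b$ for $k\geq0$. Define $\tau_0 = 0$, $\tau_1 = \min\lbrace k\geq0 : \mathrm{span}\lbrace Aw_0,\ldots,Aw_k\rbrace = \mathcal{C}(w)\rbrace$, and for $\ell\geq2$, $\tau_\ell = \min\lbrace k>\tau_{\ell-1} : \mathrm{span}\lbrace Aw_{\tau_{\ell-1}+1},\ldots,Aw_k\rbrace = \mathcal{C}(w)\rbrace$ if $\tau_{\ell-1}<\infty$, else $\tau_\ell = \infty$. For finite stopping times, let $\mathcal{F}_\ell$ be the set of matrices whose columns form a maximal linearly independent subset of $\lbrace Aw_{\tau_{\ell-1}+1}/\|Aw_{\tau_{\ell-1}+1}\|_2,\ldots,Aw_{\tau_\ell}/\|Aw_{\tau_\ell}\|_2\rbrace$, and $\gamma_\ell = 1-\min_{F\in\mathcal{F}_\ell}\det(F'F)$.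 Then $\gamma_\ell\in[0,1)$ and, for any $\ell$, on the event $\lbrace\tau_\ell<\infty\rbrace$, $$\|r_{\tau_\ell+1} - P_{\mathcal{L}(w)}r_0\|_2^2 \leq \Big(\prod_{j=1}^\ell\gamma_j\Big)\|P_{\mathcal{C}(w)}r_0\|_2^2.$$ Therefore, for any $k$, $\|r_k - P_{\mathcal{L}(w)}r_0\|_2^2 \leq \big(\prod_{j=1}^{L(k)}\gamma_j\big)\|P_{\mathcal{C}(w)}r_0\|_2^2$, where $L(k) = \max\lbrace\ell : k\geq\tau_\ell+1\rbrace$, on the event $\lbrace\tau_{L(k)}<\infty\rbrace$.
   Context: $P_W$ is orthogonal projection onto $W$; $A'$ is the transpose. The iteration presupposes $Aw_k\neq0$. *)

(* Defs.v *)
From HB Require Import structures.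
From mathcomp Require Import all_boot all_order all_algebra.
From mathcomp Require Import boolp classical_sets reals ereal topology
  measure lebesgue_measure probability.
Set Implicit Arguments. Unset Strict Implicit. Unset Printing Implicit Defensive.
Import Order.TTheory GRing.Theory Num.Theory.
Local Open Scope ring_scope.
Local Open Scope classical_set_scope.

(* Vectors of R^n are column vectors 'cV_n; subspaces of R^n are represented
   (mxalgebra style) by the row space of a square matrix, whose rows are the
   transposes of the vectors of the subspace. *)

Definition sqn {R : realType} {n : nat} (v : 'cV[R]_n) : R := (v^T *m v) 0 0.
Definition nrm {R : realType} {n : nat} (v : 'cV[R]_n) : R := Num.sqrt (sqn v).

Definition spanP {R : realType} {n : nat} (S : set 'cV[R]_n) (v : 'cV[R]_n) : Prop :=
  exists m (Z : 'M[R]_(m, n)), (forall i, S (row i Z)^T) /\ (v^T <= Z)%MS.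

Definition subspace_of {R : realType} {n : nat} (Q : 'cV[R]_n -> Prop) : 'M[R]_n :=
  xget 0 (fun M : 'M[R]_n => forall v : 'cV[R]_n, (v^T <= M)%MS <-> Q v).

Definition orthc {R : realType} {n : nat} (W : 'M[R]_n) : 'M[R]_n :=
  subspace_of (fun y : 'cV[R]_n => forall z : 'cV[R]_n, (z^T <= W)%MS -> z^T *m y = 0).

Definition oproj {R : realType} {n : nat} (W : 'M[R]_n) (r : 'cV[R]_n) : 'cV[R]_n :=
  xget 0 (fun p : 'cV[R]_n => (p^T <= W)%MS /\
           forall z : 'cV[R]_n, (z^T <= W)%MS -> z^T *m (r - p) = 0).

Section Kaczmarz.
Context {R : realType} {dT : measure_display} {T : measurableType dT}
  (P : probability T R) {n d : nat} (A : 'M[R]_(n, d)) (b : 'cV[R]_n).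

Definition Lset (w : T -> 'cV[R]_d) : set 'cV[R]_n :=
  [set z | P [set om | z^T *m (A *m w om) = 0] = 1%E].

Definition Lmx (w : T -> 'cV[R]_d) : 'M[R]_n := subspace_of (spanP (Lset w)).
Definition Cmx (w : T -> 'cV[R]_d) : 'M[R]_n := orthc (Lmx w).

Variables (w : T -> 'cV[R]_d) (ws : nat -> T -> 'cV[R]_d) (x0 : 'cV[R]_d).

Fixpoint xit (om : T) (k : nat) : 'cV[R]_d :=
  match k with
  | 0 => x0
  | k'.+1 => let xk := xit om k' in let wk := ws k' om in
      xk + (sqn (A *m wk))^-1 *: (wk *m wk^T *m A^T *m (b - A *m xk))
  end.

Definition res (om : T) (k : nat) : 'cV[R]_n := A *m xit om k - b.

Definition spanmx (om : T) (s e : nat) : 'M[R]_n :=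
  (\sum_(s <= i < e.+1) <<(A *m ws i om)^T>>)%MS.

Definition spanEq (om : T) (s e : nat) : bool := (spanmx om s e == Cmx w)%MS.

(* min { k : p k }, or None (= infinity) if the set is empty *)
Definition first_min (p : pred nat) : option nat :=
  match pselect (exists k, p k) with
  | left h => Some (ex_minn h)
  | right _ => None
  end.

Fixpoint tau (om : T) (l : nat) : option nat :=
  match l with
  | 0 => Some 0%N
  | l'.+1 =>
    match l' with
    | 0 => first_min (fun k => spanEq om 0 k)
    | _ => match tau om l' with
           | Some t => first_min (fun k => (t < k)%N && spanEq om t.+1 k)
           | None => None
           end
    end
  end.

Definition Uset (om : T) (s e : nat) : set 'cV[R]_n :=
  [set u | exists i, (s <= i <= e)%N /\ u = (nrm (A *m ws i om))^-1 *: (A *m ws i om)].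

Definition isF (om : T) (s e : nat) (m : nat) (F : 'M[R]_(n, m)) : Prop :=
  [/\ forall j, Uset om s e (col j F),
      row_free F^T &
      forall u, Uset om s e u ->
        (exists j, col j F = u) \/ ~~ row_free (col_mx F^T u^T)].

Definition detset (om : T) (s e : nat) : set R :=
  [set x | exists m (F : 'M[R]_(n, m)), isF om s e F /\ x = \det (F^T *m F)].

(* gamma_l = 1 - min_{F in F_l} det(F'F); the l-th block is
   {tau_{l-1}+1, ..., tau_l} for l >= 2 and {0, ..., tau_1} for l = 1 *)
Definition gamma (om : T) (l : nat) : R :=
  match tau om l, tau om l.-1 with
  | Some e, Some t => 1 - inf (detset om (if l == 1%N then 0%N else t.+1) e)
  | _, _ => 0
  end.

(* L(k) = max { l : k >= tau_l + 1 }  (= 0 when the set is empty, i.e. k = 0) *)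
Definition Lk (om : T) (k : nat) : nat :=
  \max_(l < k.+1 | if tau om l is Some t then (t < k)%N else false) (l : nat).

End Kaczmarz.

(* Main.v *)
Require Import Defs.
From HB Require Import structures.
From mathcomp Require Import all_boot all_order all_algebra.
From mathcomp Require Import boolp classical_sets reals ereal topology
  measure lebesgue_measure probability.
From mathcomp Require Import ring lra zify.
From mathcomp Require Import measurable_realfun measurable_fun_approximation.
Import Order.TTheory GRing.Theory Num.Theory.
Local Open Scope ring_scope.
Local Open Scope classical_set_scope.
Set Implicit Arguments. Unset Strict Implicit. Unset Printing Implicit Defensive.
Section LA.
Variable R : realType.
Variable n : nat.
Implicit Types u v x y z : 'cV[R]_n.

Definition dot u v : R := (u^T *m v) 0 0.

Lemma dotE u v : dot u v = \sum_i u i 0 * v i 0.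
Proof. by rewrite /dot mxE; apply: eq_bigr => i _; rewrite mxE. Qed.

Lemma sqnE v : sqn v = dot v v. Proof. by []. Qed.

Lemma dotC u v : dot u v = dot v u.
Proof. by rewrite !dotE; apply: eq_bigr => i _; rewrite mulrC. Qed.

Lemma dotDr u v w : dot u (v + w) = dot u v + dot u w.
Proof. by rewrite !dotE -big_split; apply: eq_bigr => i _; rewrite mxE mulrDr. Qed.

Lemma dotDl u v w : dot (v + w) u = dot v u + dot w u.
Proof. by rewrite dotC dotDr !(dotC u). Qed.

Lemma dotZr a u v : dot u (a *: v) = a * dot u v.
Proof. by rewrite !dotE mulr_sumr; apply: eq_bigr => i _; rewrite mxE mulrCA. Qed.

Lemma dotZl a u v : dot (a *: v) u = a * dot v u.
Proof. by rewrite dotC dotZr dotC. Qed.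

Lemma dotNr u v : dot u (- v) = - dot u v.
Proof. by rewrite -scaleN1r dotZr mulN1r. Qed.
Lemma dotNl u v : dot (- v) u = - dot v u.
Proof. by rewrite dotC dotNr dotC. Qed.
Lemma dotBr u v w : dot u (v - w) = dot u v - dot u w.
Proof. by rewrite dotDr dotNr. Qed.
Lemma dotBl u v w : dot (v - w) u = dot v u - dot w u.
Proof. by rewrite dotDl dotNl. Qed.
Lemma dot0r u : dot u 0 = 0.
Proof. by rewrite /dot mulmx0 mxE. Qed.
Lemma dot0l u : dot 0 u = 0.
Proof. by rewrite dotC dot0r. Qed.

Lemma sqn_ge0 v : 0 <= sqn v.
Proof. rewrite sqnE dotE; apply: sumr_ge0 => i _; by rewrite -expr2 sqr_ge0. Qed.

Lemma sqn_eq0 v : sqn v = 0 -> v = 0.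
Proof.
rewrite sqnE dotE => /eqP; rewrite psumr_eq0; last by move=> i _; by rewrite -expr2 sqr_ge0.
move=> /allP H; apply/matrixP => i j; rewrite (ord1 j) mxE.
by apply/eqP; rewrite -sqrf_eq0 expr2; apply: H; rewrite mem_index_enum.
Qed.

Lemma sqn_gt0 v : v != 0 -> 0 < sqn v.
Proof.
move=> nz; rewrite lt_neqAle sqn_ge0 andbT; apply/eqP => /esym/sqn_eq0.
by move/eqP: nz.
Qed.

Lemma sqnZ a v : sqn (a *: v) = a ^+ 2 * sqn v.
Proof. by rewrite !sqnE dotZr dotZl mulrA expr2. Qed.

Lemma sqnD u v : sqn (u + v) = sqn u + 2 * dot u v + sqn v.
Proof. rewrite !sqnE dotDl !dotDr (dotC v u); ring. Qed.

Lemma sqnB u v : sqn (u - v) = sqn u - 2 * dot u v + sqn v.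
Proof. rewrite !sqnE dotBl !dotBr (dotC v u); ring. Qed.

Lemma mx11_eq0 (M : 'M[R]_1) : (M = 0) <-> (M 0 0 = 0).
Proof.
split=> [->|H]; first by rewrite mxE.
by apply/matrixP => i j; rewrite (ord1 i) (ord1 j) H mxE.
Qed.

Lemma dot_sub (k : nat) (W : 'M[R]_(k, n)) z x :
  (z^T <= W)%MS -> W *m x = 0 -> dot z x = 0.
Proof.
move=> /submxP [D hD] Wx; rewrite /dot hD -mulmxA Wx mulmx0 mxE //.
Qed.

Lemma CS u v : dot u v ^+ 2 <= sqn u * sqn v.
Proof.
have [->|nz] := eqVneq u 0.
  by rewrite dot0l sqnE dot0l mul0r expr2 mul0r.
have hp := sqn_gt0 nz.
have h := sqn_ge0 (sqn u *: v - dot u v *: u).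
rewrite sqnB !sqnZ dotZl dotZr (dotC v u) in h.
have : 0 <= sqn u * (sqn u * sqn v - dot u v ^+ 2) by nra.
by rewrite pmulr_rge0 // subr_ge0.
Qed.

Lemma proj_ex (k : nat) (W : 'M[R]_(k, n)) v :
  exists p, (p^T <= W)%MS /\ W *m (v - p) = 0.
Proof.
set K := kermx W^T.
have dis : (W :&: K)%MS = 0.
  apply/eqP; rewrite -submx0; apply/rV_subP => r.
  rewrite sub_capmx => /andP[/submxP[a ->] /sub_kermxP hK].
  have : sqn (a *m W)^T = 0.
    by rewrite /sqn trmxK trmx_mul mulmxA hK mul0mx mxE.
  by move/sqn_eq0 => /(congr1 trmx); rewrite trmxK trmx0 => ->; rewrite sub0mx.
have full : row_full (W + K)%MS.
  rewrite /row_full mxrank_disjoint_sum // mxrank_ker mxrank_tr.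
  by rewrite subnKC // rank_leq_col.
have := submx_full v^T full => /sub_addsmxP [[u1 u2] /= hv].
exists (u1 *m W)^T; split; first by rewrite trmxK submxMl.
have : (v - (u1 *m W)^T)^T = u2 *m K.
  by rewrite linearB /= trmxK hv addrC addKr.
move=> h; apply: (can_inj trmxK); rewrite trmx0 trmx_mul h -mulmxA.
by have /sub_kermxP := submxMl u2 K => /=; rewrite -mulmxA.
Qed.

End LA.
Section LA2.
Variable R : realType.
Variable n : nat.
Implicit Types u v x y z : 'cV[R]_n.

Lemma subspace_ofP (Q : 'cV[R]_n -> Prop) :
  (exists M : 'M[R]_n, forall v, (v^T <= M)%MS <-> Q v) ->
  forall v, (v^T <= subspace_of Q)%MS <-> Q v.
Proof. by move=> ex; have := xgetPex 0 ex. Qed.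

Lemma orthcP (W : 'M[R]_n) v :
  (v^T <= orthc W)%MS <-> (forall z, (z^T <= W)%MS -> dot z v = 0).
Proof.
rewrite /orthc subspace_ofP.
  by split=> H z /H; rewrite mx11_eq0.
exists (kermx W^T) => y; split.
  move=> /sub_kermxP hK z /submxP [D hD].
  have hW : W *m y = 0 by rewrite -[W *m y]trmxK trmx_mul hK trmx0.
  by rewrite hD -mulmxA hW mulmx0.
move=> H; apply/sub_kermxP; apply: (can_inj trmxK).
rewrite trmx_mul trmxK trmx0; apply/matrixP => i j; rewrite (ord1 j).
have := H (row i W)^T; rewrite trmxK row_sub => /(_ isT) /(congr1 (fun M : 'M[R]_1 => M 0 0)).
by rewrite -row_mul !mxE trmxK.
Qed.

Lemma oprojP (W : 'M[R]_n) r :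
  ((oproj W r)^T <= W)%MS /\ forall z, (z^T <= W)%MS -> dot z (r - oproj W r) = 0.
Proof.
have [p [pW hp]] := proj_ex W r.
have := @xgetPex _ 0 (fun p : 'cV[R]_n => (p^T <= W)%MS /\
           forall z : 'cV[R]_n, (z^T <= W)%MS -> z^T *m (r - p) = 0).
case.
  exists p; split=> // z hz; apply/mx11_eq0; exact: dot_sub hz hp.
by move=> h1 h2; split => // z /h2 /mx11_eq0.
Qed.

Lemma submxB m (W : 'M[R]_(m, n)) x y :
  (x^T <= W)%MS -> (y^T <= W)%MS -> ((x - y)^T <= W)%MS.
Proof. by move=> hx hy; rewrite linearB /= addmx_sub // eqmx_opp. Qed.
Lemma submxD m (W : 'M[R]_(m, n)) x y :
  (x^T <= W)%MS -> (y^T <= W)%MS -> ((x + y)^T <= W)%MS.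
Proof. by move=> hx hy; rewrite linearD /= addmx_sub. Qed.
Lemma submxZ m (W : 'M[R]_(m, n)) a x :
  (x^T <= W)%MS -> ((a *: x)^T <= W)%MS.
Proof. by move=> hx; rewrite linearZ /= scalemx_sub. Qed.

Lemma orth_uniq (W : 'M[R]_n) r p q :
  (p^T <= W)%MS -> (forall z, (z^T <= W)%MS -> dot z (r - p) = 0) ->
  (q^T <= W)%MS -> (forall z, (z^T <= W)%MS -> dot z (r - q) = 0) -> p = q.
Proof.
move=> pW hp qW hq; have dW := submxB pW qW.
have := hp _ dW; have := hq _ dW => e1 e2.
apply/eqP; rewrite -subr_eq0; apply/eqP/sqn_eq0; rewrite sqnE.
have e : p - q = (r - q) - (r - p) by rewrite opprB [RHS]addrC [RHS]addrA subrK.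
by rewrite {2}e dotBr e1 e2 subrr.
Qed.

Definition step u x := x - (dot u x / sqn u) *: u.

Lemma step_orth u x : u != 0 -> dot u (step u x) = 0.
Proof.
move=> nz; rewrite /step dotBr dotZr -sqnE mulfVK ?subrr //.
by rewrite gt_eqF // sqn_gt0.
Qed.

Lemma sqn_step u x : u != 0 -> sqn (step u x) = sqn x - dot u x ^+ 2 / sqn u.
Proof.
move=> nz; have hp := sqn_gt0 nz.
rewrite /step sqnB sqnZ dotZr (dotC x u); field; by rewrite gt_eqF.
Qed.

Lemma sqn_step_le u x : u != 0 -> sqn (step u x) <= sqn x.
Proof.
move=> nz; rewrite sqn_step // lerBlDr lerDl divr_ge0 ?sqr_ge0 //.
exact: sqn_ge0.
Qed.

Lemma stepD u x y : step u (x + y) = step u x + step u y.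
Proof. by rewrite /step dotDr mulrDl scalerDl opprD addrACA. Qed.

Lemma stepN u y : step u (- y) = - step u y.
Proof. by rewrite /step dotNr mulNr scaleNr opprK opprD opprK. Qed.

Lemma stepB u x y : step u (x - y) = step u x - step u y.
Proof. by rewrite stepD stepN. Qed.

Lemma step_id u x : dot u x = 0 -> step u x = x.
Proof. by move=> h; rewrite /step h mul0r scale0r subr0. Qed.

Lemma step_sub m (W : 'M[R]_(m, n)) u x :
  (u^T <= W)%MS -> (x^T <= W)%MS -> ((step u x)^T <= W)%MS.
Proof. by move=> hu hx; apply: submxB => //; apply: submxZ. Qed.

Fixpoint run (us : nat -> 'cV[R]_n) (i k : nat) (x : 'cV[R]_n) : 'cV[R]_n :=
  match k with
  | 0 => x
  | k'.+1 => run us i.+1 k' (step (us i) x)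
  end.

Lemma runD us i k x y : run us i k (x + y) = run us i k x + run us i k y.
Proof. by elim: k i x y => //= k IH i x y; rewrite stepD IH. Qed.
Lemma runB us i k x y : run us i k (x - y) = run us i k x - run us i k y.
Proof. by elim: k i x y => //= k IH i x y; rewrite stepB IH. Qed.

Lemma run_id us i k x : (forall j, (i <= j < i + k)%N -> dot (us j) x = 0) ->
  run us i k x = x.
Proof.
elim: k i x => //= k IH i x H; rewrite step_id; last by apply: H; rewrite leqnn addnS ltnS leq_addr.
apply: IH => j /andP[h1 h2]; apply: H; rewrite addnS -addSn h2 andbT.
exact: ltnW.
Qed.

Lemma run_sub m (W : 'M[R]_(m, n)) us i k x :
  (forall j, (i <= j < i + k)%N -> ((us j)^T <= W)%MS) ->
  (x^T <= W)%MS -> ((run us i k x)^T <= W)%MS.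
Proof.
elim: k i x => //= k IH i x H hx; apply: IH.
  move=> j /andP[h1 h2]; apply: H; rewrite addnS -addSn h2 andbT; exact: ltnW.
by apply: step_sub => //; apply: H; rewrite leqnn addnS ltnS leq_addr.
Qed.

Lemma run_le us i k x : (forall j, us j != 0) -> sqn (run us i k x) <= sqn x.
Proof.
move=> nz; elim: k i x => //= k IH i x.
exact: le_trans (IH _ _) (sqn_step_le _ (nz i)).
Qed.

Lemma runS us i k x : run us i k.+1 x = step (us (i + k)%N) (run us i k x).
Proof.
elim: k i x => [|k IH] i x; first by rewrite addn0.
change (run us i.+1 k.+1 (step (us i) x) = step (us (i + k.+1)%N) (run us i.+1 k (step (us i) x))).
by rewrite IH addSnnS.
Qed.

End LA2.
Section Det.
Variable R : realType.
Variable n : nat.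

Lemma det_gram_row m (f b : 'cV[R]_n) (G : 'M[R]_(n, m)) (c : 'cV[R]_m) :
  f = G *m c + b -> G^T *m b = 0 ->
  \det ((row_mx f G)^T *m row_mx f G) = sqn b * \det (G^T *m G).
Proof.
move=> hf hb.
pose M : 'M[R]_(1 + m) := block_mx 1%:M 0 c 1%:M.
have hFM : row_mx f G = row_mx b G *m M.
  by rewrite mul_row_block !mulmx1 !mulmx0 add0r hf addrC.
have dM : \det M = 1 by rewrite det_lblock !det1 mulr1.
rewrite hFM trmx_mul -mulmxA !det_mulmx det_tr dM mul1r mulmxA det_mulmx dM mulr1.
rewrite tr_row_mx mul_col_row hb.
have -> : b^T *m G = 0 by rewrite -(trmxK (b^T *m G)) trmx_mul trmxK hb trmx0.
by rewrite det_ublock det_mx11.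
Qed.

Lemma rowfree_det m (F : 'M[R]_(n, m)) : \det (F^T *m F) != 0 -> row_free F^T.
Proof.
move=> hd; rewrite /row_free eqn_leq rank_leq_row /=.
have hu : F^T *m F \in unitmx by rewrite unitmxE unitfE.
by rewrite -{1}(mxrank_unit hu) mxrankM_maxl.
Qed.

Lemma det_gram_gt0 m (F : 'M[R]_(n, m)) : row_free F^T -> 0 < \det (F^T *m F).
Proof.
elim: m F => [|m IH] F hF.
  by rewrite det_mx00 ltr01.
pose F' : 'M[R]_(n, 1 + m) := F.
have eF : F = row_mx (lsubmx F') (rsubmx F') by rewrite hsubmxK.
set f := lsubmx F' in eF; set G := rsubmx F' in eF.
have hFt : (F^T :=: f^T + G^T)%MS.
  apply: eqmx_trans (eqmx_sym (addsmxE _ _)); rewrite -tr_row_mx -eF; exact: eqmx_refl.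
have rG : row_free G^T.
  move: hF; rewrite /row_free => /eqP hF; rewrite eqn_leq rank_leq_row /=.
  have := mxrank_adds_leqif f^T G^T => /leqifP; rewrite -hFt hF.
  have : (\rank f^T <= 1)%N by exact: rank_leq_row.
  by case: ifP => _ ; lia.
have [p [pG hp]] := proj_ex G^T f.
have [c hc] : exists c, p = G *m c.
  move/submxP: pG => [D hD]; exists D^T; by rewrite -(trmxK p) hD trmx_mul trmxK.
have hb : f - p != 0.
  apply/eqP => h0; have fp : f = p by apply/eqP; rewrite -subr_eq0 h0.
  move: hF; rewrite /row_free hFt.
  have /addsmx_idPr -> : (f^T <= G^T)%MS by rewrite fp.
  move: rG; rewrite /row_free => /eqP ->. by rewrite eqn_leq ltnn andbF.
rewrite eF (det_gram_row (c := c) (b := f - p)); last by [].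
  by rewrite mulr_gt0 ?sqn_gt0 ?IH.
by rewrite hc addrC subrK.
Qed.

End Det.
Section Meany.
Variable R : realType.
Variable n : nat.
Variable us : nat -> 'cV[R]_n.
Hypothesis nz : forall j, us j != 0.

Definition Sp (i k : nat) : 'M[R]_n := (\sum_(i <= j < i + k) <<(us j)^T>>)%MS.

Lemma Sp0 i : Sp i 0 = 0.
Proof. by rewrite /Sp big_geq // addn0. Qed.

Lemma SpS i k : Sp i k.+1 = (<<(us i)^T>> + Sp i.+1 k)%MS.
Proof. by rewrite /Sp big_ltn ?addnS ?ltnS ?leq_addr // -addSn. Qed.

Lemma Sp_sup i k j : (i <= j < i + k)%N -> ((us j)^T <= Sp i k)%MS.
Proof.
elim: k i => [|k IH] i; first by rewrite addn0 => /andP[h1 h2]; move: (leq_ltn_trans h1 h2); rewrite ltnn.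
rewrite SpS => /andP[h1 h2]; case: (ltngtP i j) h1 => // [lt _ | <- _].
  apply: submx_trans (addsmxSr _ _); apply: IH; rewrite lt /=; by rewrite addSn -addnS.
by apply: submx_trans (addsmxSl _ _); rewrite genmxE.
Qed.

Lemma Sp_rec i k : (Sp i k.+1 :=: (us i)^T + Sp i.+1 k)%MS.
Proof. by rewrite SpS; apply: adds_eqmx => //; exact: genmxE. Qed.

Lemma nrm_sq (v : 'cV[R]_n) : nrm v ^+ 2 = sqn v.
Proof. by rewrite /nrm sqr_sqrtr // sqn_ge0. Qed.

Lemma nrm_gt0 (v : 'cV[R]_n) : v != 0 -> 0 < nrm v.
Proof. by move=> h; rewrite /nrm sqrtr_gt0 sqn_gt0. Qed.

Lemma col_row_mx_l m (X : 'cV[R]_n) (Y : 'M[R]_(n, m)) (c : 'I_1) :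
  col (lshift m c) (row_mx X Y) = X.
Proof. by apply/matrixP => i j; rewrite [LHS]mxE row_mxEl (ord1 j) (ord1 c). Qed.

Lemma col_row_mx_r m (X : 'cV[R]_n) (Y : 'M[R]_(n, m)) (c : 'I_m) :
  col (rshift 1 c) (row_mx X Y) = col c Y.
Proof. by apply/matrixP => i j; rewrite [LHS]mxE row_mxEr [RHS]mxE. Qed.

Lemma meany k : forall i, exists m (F : 'M[R]_(n, m)),
 [/\ (forall c, exists2 j, (i <= j < i + k)%N & col c F = (nrm (us j))^-1 *: us j),
     row_free F^T, (F^T == Sp i k)%MS, 0 < \det (F^T *m F) <= 1 &
     forall x, (x^T <= Sp i k)%MS -> sqn (run us i k x) <= (1 - \det (F^T *m F)) * sqn x].
Proof.
elim: k => [|k IH] i.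
  exists 0%N, 0; split.
  - by case.
  - by rewrite /row_free trmx0 mxrank0.
  - by rewrite Sp0 trmx0; apply/andP; split; rewrite sub0mx.
  - by rewrite det_mx00 ltr01 lexx.
  move=> x; rewrite Sp0 submx0 => /eqP hx.
  have -> : x = 0 by rewrite -(trmxK x) hx trmx0.
  by rewrite /= sqnE dot0r mulr0.
have [m' [F' [hc' hr' hS' hd' hI']]] := IH i.+1.
set S' := Sp i.+1 k in hS' hI'.
set u := us i.
have Srec := Sp_rec i k; rewrite -/S' -/u in Srec.
have hrun : forall x, run us i k.+1 x = run us i.+1 k (step u x) by [].
have inS' : forall j, (i.+1 <= j < i.+1 + k)%N -> ((us j)^T <= S')%MS by move=> j; apply: Sp_sup.
have uS : (u^T <= Sp i k.+1)%MS by rewrite Srec addsmxSl.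
case: (boolP (u^T <= S')%MS) => [uin|uout].
  have SS' : (Sp i k.+1 :=: S')%MS by apply: eqmx_trans Srec _; apply/addsmx_idPr.
  exists m', F'; split => //.
  - move=> c; have [j hj ->] := hc' c; exists j => //.
    by move: hj; rewrite addSn -addnS => /andP[h1 h2]; rewrite h2 andbT ltnW.
  - by apply/eqmxP; apply: eqmx_trans _ (eqmx_sym SS'); apply/eqmxP.
  move=> x hx; rewrite hrun.
  have hy : ((step u x)^T <= S')%MS.
    apply: step_sub; first exact: uin.
    by move: hx; rewrite SS'.
  apply: le_trans (hI' _ hy) _; apply: ler_wpM2l; last exact: sqn_step_le (nz i).
  by rewrite subr_ge0; case/andP: hd'.
have [p [pS hp]] := proj_ex S' u.
set b0 := u - p in hp.
have hb0 : b0 != 0.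
  apply/eqP => h0; move/negP: uout; apply; have -> : u = p by apply/eqP; rewrite -subr_eq0 -/b0 h0.
  done.
have uE : u = p + b0 by rewrite /b0 addrC subrK.
have pb0 : dot p b0 = 0 by apply: dot_sub pS hp.
have hsu : sqn u = sqn p + sqn b0 by rewrite uE sqnD pb0 mulr0 addr0.
have nu0 := nz i; rewrite -/u in nu0.
have hnu := nrm_gt0 nu0.
pose F : 'M[R]_(n, 1 + m') := row_mx ((nrm u)^-1 *: u) F'.
have F'S' : (F'^T :=: S')%MS by apply/eqmxP.
have hdet : \det (F^T *m F) = sqn b0 / sqn u * \det (F'^T *m F').
  have [D hD] : exists D, p^T = D *m F'^T by apply/submxP; rewrite F'S'.
  have [E hE] : exists E, F'^T = E *m S' by apply/submxP; rewrite F'S'.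
  rewrite /F (det_gram_row (c := (nrm u)^-1 *: D^T) (b := (nrm u)^-1 *: b0)).
  - by rewrite sqnZ exprVn nrm_sq [_^-1 * _]mulrC.
  - rewrite -scalemxAr -scalerDr; congr (_ *: _).
    have -> : F' *m D^T = p by rewrite -(trmxK p) hD trmx_mul trmxK.
    exact: uE.
  - by rewrite -scalemxAr hE -mulmxA hp mulmx0 scaler0.
have hsig : 0 < sqn b0 / sqn u <= 1.
  rewrite divr_gt0 ?sqn_gt0 //= ler_pdivrMr ?sqn_gt0 // mul1r hsu lerDr; exact: sqn_ge0.
have hdF : 0 < \det (F^T *m F) <= 1.
  rewrite hdet; case/andP: hsig => s1 s2; case/andP: hd' => d1 d2.
  by rewrite mulr_gt0 //= mulr_ile1 // ltW.
exists (1 + m')%N, F; split => //.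
- move=> c; rewrite -(splitK c); case: (split c) => c1 /=.
    by exists i; [rewrite leqnn addnS ltnS leq_addr | rewrite col_row_mx_l].
  rewrite col_row_mx_r; have [j hj ->] := hc' c1; exists j => //.
  by move: hj; rewrite addSn -addnS => /andP[h1 h2]; rewrite h2 andbT ltnW.
- by apply: rowfree_det; case/andP: hdF => h _; rewrite gt_eqF.
- apply/eqmxP; rewrite /F tr_row_mx.
  apply: eqmx_trans (eqmx_sym (addsmxE _ _)) _; apply: eqmx_trans _ (eqmx_sym Srec).
  apply: adds_eqmx => //; rewrite linearZ /=; apply: eqmx_scale.
  by rewrite invr_eq0 gt_eqF.
move=> x hx; rewrite hrun.
set y := step u x.
have hyS : (y^T <= Sp i k.+1)%MS by apply: step_sub.
have hyu : dot u y = 0 by apply: step_orth (nz i).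
have hyx : sqn y <= sqn x by apply: sqn_step_le (nz i).
move: hyS; rewrite Srec => /sub_addsmxP [[D1 D2] /= hyD].
set c := D1 0 0.
set t := (D2 *m S')^T.
have tS : (t^T <= S')%MS by rewrite trmxK submxMl.
have [y' y'E] : exists y', y' = t + c *: p by eexists.
have [z zE] : exists z, z = c *: b0 by eexists.
have y'S : (y'^T <= S')%MS by rewrite y'E; apply: submxD => //; apply: submxZ.
have hz : S' *m z = 0 by rewrite zE -scalemxAr hp scaler0.
have yE : y = y' + z.
  apply: (can_inj trmxK); rewrite hyD (mx11_scalar D1) mul_scalar_mx -/c.
  rewrite y'E zE /b0 !linearD !linearZ /=.
  by rewrite /t trmxK linearN /= scalerN addrCA addrK.
have hrz : run us i.+1 k z = z.
  apply: run_id => j hj; apply: dot_sub (inS' _ hj) hz.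
have ry'S := run_sub inS' y'S.
have hry : sqn (run us i.+1 k y) = sqn (run us i.+1 k y') + sqn z.
  by rewrite yE runD hrz sqnD (dot_sub ry'S hz) mulr0 addr0.
have hsy : sqn y = sqn y' + sqn z.
  by rewrite yE sqnD (dot_sub y'S hz) mulr0 addr0.
have hIy := hI' _ y'S.
have hpy : dot p y' = - (c * sqn b0).
  move: hyu; rewrite uE yE dotDl !dotDr (dotC b0 y') (dot_sub y'S hp).
  rewrite (dot_sub pS hz) zE dotZr -sqnE => h.
  by apply/eqP; rewrite -subr_eq0 opprK; apply/eqP; rewrite -h; ring.
have hCS := CS p y'.
have hzs : sqn z = c ^+ 2 * sqn b0 by rewrite zE sqnZ.
set s := sqn b0 / sqn u.
have key : s * sqn y <= sqn y'.
  rewrite /s mulrAC ler_pdivrMr ?sqn_gt0 // hsy hzs hsu.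
  rewrite hpy in hCS.
  have := sqn_ge0 y'. have := sqn_ge0 b0. nra.
rewrite hry hdet -/s.
set d' := \det (F'^T *m F') in hIy hd' *.
have := sqn_ge0 y'; have := sqn_ge0 z.
case/andP: hd' => d1 d2; case/andP: hsig => s1 s2.
rewrite hsy in key hyx.
have h0 : 0 <= 1 - s * d'.
  rewrite subr_ge0; apply: mulr_ile1 => //; exact: ltW.
have h1 : 0 <= (1 - s * d') * (sqn x - (sqn y' + sqn z)).
  by apply: mulr_ge0 => //; rewrite subr_ge0.
have h2 : 0 <= d' * (sqn y' - s * (sqn y' + sqn z)).
  by apply: mulr_ge0; [exact: ltW | rewrite subr_ge0].
nra.
Qed.

End Meany.
Section FinLB.
Variable R : realType.

Lemma fin_lb_seq (X : eqType) (s : seq X) (p : pred X) (h : X -> R) :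
  (forall x, p x -> 0 < h x) -> exists c, 0 < c /\ forall x, x \in s -> p x -> c <= h x.
Proof.
move=> hp; elim: s => [|x s [c [hc H]]]; first by exists 1; split => //.
case: (boolP (p x)) => px.
  exists (Num.min c (h x)); split; first by rewrite lt_min hc hp.
  move=> y; rewrite inE => /orP [/eqP -> _|ys py]; first by rewrite ge_min lexx orbT.
  by rewrite ge_min H.
exists c; split => // y; rewrite inE => /orP [/eqP -> py|ys py]; last exact: H.
by rewrite py in px.
Qed.

Lemma fin_lb (X : finType) (p : pred X) (h : X -> R) :
  (forall x, p x -> 0 < h x) -> exists c, 0 < c /\ forall x, p x -> c <= h x.
Proof.
move=> hp; have [c [hc H]] := fin_lb_seq (enum X) hp.
by exists c; split => // x; apply: H; rewrite mem_enum.
Qed.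

Variable n : nat.
Variable V : nat -> 'cV[R]_n.
Variable e : nat.

Definition mkF m (g : {ffun 'I_m -> 'I_e.+1}) : 'M[R]_(n, m) :=
  \matrix_(a < n, j < m) V (g j) a 0.

Lemma lb_N N : exists c, 0 < c /\ forall m (g : {ffun 'I_m -> 'I_e.+1}), (m <= N)%N ->
  row_free (mkF g)^T -> c <= \det ((mkF g)^T *m mkF g).
Proof.
elim: N => [|N [c [hc H]]].
  have [c [hc H]] := @fin_lb {ffun 'I_0 -> 'I_e.+1} (fun g => row_free (mkF g)^T)
     (fun g => \det ((mkF g)^T *m mkF g)) (fun g => @det_gram_gt0 _ _ _ _).
  exists c; split => // m g; rewrite leqn0 => /eqP hm; move: g; rewrite hm; exact: H.
have [c' [hc' H']] := @fin_lb {ffun 'I_N.+1 -> 'I_e.+1} (fun g => row_free (mkF g)^T)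
     (fun g => \det ((mkF g)^T *m mkF g)) (fun g => @det_gram_gt0 _ _ _ _).
exists (Num.min c c'); split; first by rewrite lt_min hc hc'.
move=> m g; rewrite leq_eqVlt => /orP [/eqP hm|hm].
  move: g; rewrite hm => g /H' hg; by rewrite ge_min hg orbT.
by move=> /(H _ g hm) hg; rewrite ge_min hg.
Qed.

Lemma lb_all : exists c, 0 < c /\ forall m (F : 'M[R]_(n, m)),
  row_free F^T -> (forall j, exists2 i, (i <= e)%N & col j F = V i) ->
  c <= \det (F^T *m F).
Proof.
have [c [hc H]] := lb_N n; exists c; split => // m F hF hcol.
have mn : (m <= n)%N.
  by move: hF; rewrite /row_free => /eqP <-; exact: rank_leq_col.
pose g := [ffun j => odflt ord0 [pick i : 'I_e.+1 | col j F == V i]].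
have hg : forall j, col j F = V (g j).
  move=> j; rewrite /g ffunE; case: pickP => [i /eqP //|H0].
  have [i hi hc'] := hcol j; have := H0 (Ordinal (hi : (i < e.+1)%N)).
  by rewrite /= hc' eqxx.
have -> : F = mkF g.
  apply/matrixP => a j; rewrite mxE -(hg j) mxE //.
apply: H => //; have -> // : mkF g = F.
apply/matrixP => a j; rewrite mxE -(hg j) mxE //.
Qed.

End FinLB.
Section Main.
Variables (R : realType) (dT : measure_display) (T : measurableType dT)
  (P : probability T R) (n d : nat) (A : 'M[R]_(n, d)) (b : 'cV[R]_n)
  (w : T -> 'cV[R]_d) (ws : nat -> T -> 'cV[R]_d) (x0 : 'cV[R]_d) (om : T).
Hypothesis hC : forall l, ((A *m ws l om)^T <= Cmx P A w)%MS.
Hypothesis hnz : forall l, A *m ws l om != 0.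

Let us := fun j => A *m ws j om.
Let L := Lmx P A w.
Let C := Cmx P A w.
Let r := res A b ws x0 om.

Lemma res_step k : r k.+1 = step (us k) (r k).
Proof.
rewrite /r /res /step /= /us.
set x := xit A b ws x0 om k; set wk := ws k om.
rewrite mulmxDr -scalemxAr.
have e1 : A *m (wk *m wk^T *m A^T *m (b - A *m x)) =
    dot (A *m wk) (b - A *m x) *: (A *m wk).
  rewrite !mulmxA -(mulmxA (A *m wk)) -trmx_mul -(mulmxA (A *m wk)).
  by rewrite (mx11_scalar ((A *m wk)^T *m (b - A *m x))) mul_mx_scalar.
rewrite e1 scalerA -[b - A *m x]opprB dotNr mulrN scaleNr [_^-1 * _]mulrC.
by rewrite addrAC.
Qed.

Let p := oproj L (r 0).

Lemma p_orth j : dot (us j) p = 0.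
Proof.
have := hC j; rewrite /C /Cmx orthcP => H.
by rewrite dotC; apply: H; case: (oprojP L (r 0)).
Qed.

Lemma r0p_C : ((r 0 - p)^T <= C)%MS.
Proof. by rewrite /C /Cmx orthcP => z hz; case: (oprojP L (r 0)) => _ /(_ z hz). Qed.

Lemma projC : oproj C (r 0) = r 0 - p.
Proof.
have [h1 h2] := oprojP C (r 0).
apply: (orth_uniq h1 h2 r0p_C) => z hz.
rewrite opprB addrC subrK.
move: hz; rewrite /C /Cmx orthcP => H; rewrite dotC; apply: H.
by case: (oprojP L (r 0)).
Qed.

Lemma resrun i k : r (i + k) - p = run us i k (r i - p).
Proof.
elim: k => [|k IH]; first by rewrite addn0.
rewrite runS -IH addnS res_step stepB (step_id (p_orth _)) //.
Qed.

Lemma rC k : ((r k - p)^T <= C)%MS.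
Proof.
have := resrun 0 k; rewrite add0n => ->; apply: run_sub r0p_C => j _; exact: hC.
Qed.

Definition E k := sqn (r k - p).

Lemma E_mono i k : E (i + k) <= E i.
Proof. by rewrite /E resrun; apply: run_le. Qed.

Lemma block s e : (s <= e)%N -> spanEq P A w ws om s e ->
  exists m (F : 'M[R]_(n, m)), [/\ isF A ws om s e F, 0 < \det (F^T *m F) <= 1 &
     E e.+1 <= (1 - \det (F^T *m F)) * E s].
Proof.
move=> se /eqmxP hsp.
have [m [F [hc hr hS hd hI]]] := meany hnz (e.+1 - s) s.
have hk : (s + (e.+1 - s) = e.+1)%N by rewrite subnKC // ltnW.
have SpE : Sp us s (e.+1 - s) = spanmx A ws om s e by rewrite /Sp hk.
rewrite SpE in hS hI.
exists m, F; split => //.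
- split => //.
  + move=> j; have [i hi ->] := hc j; exists i; split => //.
    by move: hi; rewrite hk ltnS.
  move=> u [i [hi ->]]; right.
  have hu : (((nrm (us i))^-1 *: us i)^T <= F^T)%MS.
    move/eqmxP: hS => ->; apply: submxZ; rewrite -SpE; apply: Sp_sup.
    by rewrite hk ltnS.
  have [rk1 _] := addsmxE F^T ((nrm (us i))^-1 *: us i)^T.
  have [rk2 _] := addsmx_idPl hu.
  rewrite /row_free -rk1 rk2; move/eqP: hr => ->.
  by rewrite addn1 neq_ltn ltnSn.
- have h := hI (r s - p); rewrite -resrun hk in h; rewrite /E; apply: h.
  rewrite hsp; exact: rC.
Qed.


Lemma first_minP (q : pred nat) k : first_min q = Some k -> q k.
Proof. by rewrite /first_min; case: pselect => // h [<-]; case: ex_minnP. Qed.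

Lemma tau_spec l e : (0 < l)%N -> tau P A w ws om l = Some e ->
  exists t, tau P A w ws om l.-1 = Some t /\
    ((if l == 1%N then 0%N else t.+1) <= e)%N /\
    spanEq P A w ws om (if l == 1%N then 0%N else t.+1) e.
Proof.
case: l => // [[|l]] _.
  move=> he; have h := @first_minP (fun k => spanEq P A w ws om 0 k) _ he.
  by exists 0%N.
have hdef : tau P A w ws om l.+2 = (match tau P A w ws om l.+1 with
   | Some t => first_min (fun k => (t < k)%N && spanEq P A w ws om t.+1 k)
   | None => None end) by [].
rewrite hdef; case E: (tau P A w ws om l.+1) => [t|] // he.
have /andP [lt h] := @first_minP (fun k => (t < k)%N && spanEq P A w ws om t.+1 k) _ he.
by exists t.
Qed.

Lemma gamma_ok l e : (0 < l)%N -> tau P A w ws om l = Some e ->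
  exists t, tau P A w ws om l.-1 = Some t /\
    [/\ 0 <= gamma P A w ws om l, gamma P A w ws om l < 1 &
        E e.+1 <= gamma P A w ws om l * E (if l == 1%N then 0%N else t.+1)].
Proof.
move=> l0 he; have [t [ht [se hsp]]] := tau_spec l0 he.
exists t; split => //.
set s := (if l == 1%N then 0%N else t.+1) in se hsp *.
have -> : gamma P A w ws om l = 1 - inf (detset A ws om s e) by rewrite /gamma he ht.
have [m [F [hF hd hE]]] := block se hsp.
have [c [hc hlb]] := lb_all (fun i => (nrm (us i))^-1 *: us i) e.
have lbc : lbound (detset A ws om s e) c.
  move=> x [m' [F' [[hc' hr' _] ->]]]; apply: hlb => // j.
  by have [i [/andP [_ hi] ->]] := hc' j; exists i.
have Fin : detset A ws om s e (\det (F^T *m F)) by exists m, F.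
have i1 : c <= inf (detset A ws om s e) by apply: lb_le_inf => //; exists (\det (F^T *m F)).
have i2 : inf (detset A ws om s e) <= \det (F^T *m F).
  by apply: ge_inf => //; exists c.
have E0 : 0 <= E s by apply: sqn_ge0.
case/andP: hd => d1 d2.
split.
- by rewrite subr_ge0; apply: le_trans i2 d2.
- by rewrite ltrBlDr ltrDl; apply: lt_le_trans i1.
- apply: le_trans hE _; apply: ler_wpM2r => //; by rewrite lerB.
Qed.

Lemma clause2 l e : tau P A w ws om l = Some e ->
  E e.+1 <= (\prod_(1 <= j < l.+1) gamma P A w ws om j) * E 0.
Proof.
elim: l e => [|l IH] e.
  move=> [<-]; rewrite big_geq // mul1r; exact: (E_mono 0 1).
move=> he; have [t [ht [g0 g1 hE]]] := gamma_ok (ltn0Sn l) he.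
rewrite big_nat_recr //= [_ * gamma _ _ _ _ _ _]mulrC -mulrA; apply: le_trans hE _.
apply: ler_wpM2l => //.
case: l IH ht {he g0 g1} => [|l] IH ht /=.
  by rewrite big_geq // mul1r.
exact: IH.
Qed.


Lemma Lk_spec k : (0 < k)%N -> exists2 t, tau P A w ws om (Lk P A w ws om k) = Some t & (t < k)%N.
Proof.
move=> k0.
pose Q := fun l : 'I_k.+1 => if tau P A w ws om l is Some t then (t < k)%N else false.
have hQ : (0 < #|Q|)%N.
  apply/card_gt0P; exists ord0; rewrite /in_mem /= /Q /=. done.
have [i0 hi0 hmax] := @eq_bigmax_cond _ Q (fun l : 'I_k.+1 => nat_of_ord l) hQ.
have -> : Lk P A w ws om k = i0 by rewrite /Lk; exact: hmax.
move: hi0; rewrite /in_mem /= /Q; case: (tau P A w ws om i0) => // t ht.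
by exists t.
Qed.

Lemma Lk0 : Lk P A w ws om 0 = 0%N.
Proof. by rewrite /Lk big_pred0 // => i; rewrite (ord1 i). Qed.

Lemma clause3 k :
  E k <= (\prod_(1 <= j < (Lk P A w ws om k).+1) gamma P A w ws om j) * E 0.
Proof.
case: k => [|k]; first by rewrite Lk0 big_geq // mul1r.
have [t ht tk] := Lk_spec (ltn0Sn k).
apply: le_trans (clause2 ht).
have -> : k.+1 = (t.+1 + (k.+1 - t.+1))%N by rewrite subnKC.
exact: E_mono.
Qed.


Lemma all3 :
    (forall l e, (0 < l)%N -> tau P A w ws om l = Some e ->
        0 <= gamma P A w ws om l < 1) /\
    (forall l e, tau P A w ws om l = Some e ->
        sqn (res A b ws x0 om e.+1 - oproj (Lmx P A w) (res A b ws x0 om 0))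
        <= (\prod_(1 <= j < l.+1) gamma P A w ws om j)
           * sqn (oproj (Cmx P A w) (res A b ws x0 om 0))) /\
    (forall k,
        sqn (res A b ws x0 om k - oproj (Lmx P A w) (res A b ws x0 om 0))
        <= (\prod_(1 <= j < (Lk P A w ws om k).+1) gamma P A w ws om j)
           * sqn (oproj (Cmx P A w) (res A b ws x0 om 0))).
Proof.
have hpc := projC; rewrite /C /r in hpc; rewrite hpc.
split; [|split].
- move=> l e l0 he; have [t [_ [g0 g1 _]]] := gamma_ok l0 he.
  by rewrite g0 g1.
- move=> l e he; exact: clause2 he.
- move=> k; exact: clause3.
Qed.

End Main.
Section Meas.
Variables (R : realType) (dT : measure_display) (T : measurableType dT).

Lemma meas_eq0 k d (M : 'M[R]_(k, d)) (f : T -> 'cV[R]_d) :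
  (forall i, measurable_fun setT (fun om => f om i 0)) ->
  measurable [set om | M *m f om = 0].
Proof.
move=> mf.
have me : forall i, measurable_fun setT (fun om => (M *m f om) i 0).
  move=> i; under eq_fun do rewrite mxE.
  apply: measurable_sum => j; apply: measurable_funM => //; exact: measurable_cst.
have mg : measurable_fun setT (fun om => sqn (M *m f om)).
  rewrite /sqn; under eq_fun do rewrite mxE.
  apply: measurable_sum => i; under eq_fun do rewrite mxE.
  by apply: measurable_funM; apply: me.
have -> : [set om | M *m f om = 0] = (fun om => sqn (M *m f om)) @^-1` [set 0].
  apply/seteqP; split => om /=; first by move=> ->; rewrite sqnE dot0r.
  exact: sqn_eq0.
rewrite -[X in measurable X]setTI; apply: mg => //; exact: measurable_set1.
Qed.

End Meas.

Unset Implicit Arguments.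

Theorem mainTheorem12 (R : realType) (dT : measure_display) (T : measurableType dT)
  (P : probability T R) (n d : nat) (A : 'M[R]_(n, d)) (b : 'cV[R]_n)
  (w : T -> 'cV[R]_d) (ws : nat -> T -> 'cV[R]_d) (x0 : 'cV[R]_d) :
  (exists xs : 'cV[R]_d, A *m xs = b) ->
  (forall i j, measurable_fun setT (fun om => w om i j)) ->
  (forall l i j, measurable_fun setT (fun om => ws l om i j)) ->
  (forall l, P [set om | ((A *m ws l om)^T <= Cmx P A w)%MS] = 1%E) ->
  (forall l, P [set om | A *m ws l om != 0] = 1%E) ->
  {ae P, forall om,
    (forall l e, (0 < l)%N -> tau P A w ws om l = Some e ->
        0 <= gamma P A w ws om l < 1) /\
    (forall l e, tau P A w ws om l = Some e ->
        sqn (res A b ws x0 om e.+1 - oproj (Lmx P A w) (res A b ws x0 om 0))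
        <= (\prod_(1 <= j < l.+1) gamma P A w ws om j)
           * sqn (oproj (Cmx P A w) (res A b ws x0 om 0))) /\
    (forall k,
        sqn (res A b ws x0 om k - oproj (Lmx P A w) (res A b ws x0 om 0))
        <= (\prod_(1 <= j < (Lk P A w ws om k).+1) gamma P A w ws om j)
           * sqn (oproj (Cmx P A w) (res A b ws x0 om 0)))}.
Proof.
move=> _ _ mws hP1 hP2.
set C := Cmx P A w.
have m1 : forall l, measurable [set om | ((A *m ws l om)^T <= C)%MS].
  move=> l.
  have -> : [set om | ((A *m ws l om)^T <= C)%MS] =
            [set om | ((cokermx C)^T *m A) *m ws l om = 0].
    apply/seteqP; split => om /=.
      rewrite submxE => /eqP h.
      by rewrite -mulmxA -(trmxK (A *m ws l om)) -trmx_mul h trmx0.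
    move=> h; rewrite submxE; apply/eqP.
    by rewrite -(trmxK (_ *m cokermx C)) trmx_mul trmxK mulmxA h trmx0.
  by apply: meas_eq0 => i; exact: mws.
have m2 : forall l, measurable [set om | A *m ws l om != 0].
  move=> l; have -> : [set om | A *m ws l om != 0] = ~` [set om | A *m ws l om = 0].
    by apply/seteqP; split => om /=; move/eqP.
  by apply: measurableC; apply: meas_eq0 => i; exact: mws.
have hG : forall l, \forall om \ae P, ((A *m ws l om)^T <= C)%MS /\ A *m ws l om != 0.
  move=> l.
  have n1 : P.-negligible (~` [set om | ((A *m ws l om)^T <= C)%MS]).
    apply/negligibleP; first exact: measurableC.
    by apply: (etrans (probability_setC P (m1 l))); rewrite hP1 subee.
  have n2 : P.-negligible (~` [set om | A *m ws l om != 0]).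
    apply/negligibleP; first exact: measurableC.
    by apply: (etrans (probability_setC P (m2 l))); rewrite hP2 subee.
  apply: negligibleS (negligibleU n1 n2) => om /= H.
  exact/not_andP.
have := ae_foralln hG; apply: filterS => om H.
apply: all3; move=> l; by case: (H l).
Qed.
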